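(* For every stepwise NFTA $N$, the corresponding transition algebra $\mathcal{F}_N$ is a forest algebra.
   Context: A stepwise NFTA is $N=(Q,\Sigma,\delta,\mathsf{Init},q_0,q_F)$ with finite state set $Q$, $\delta\subseteq Q^3$. Its transition algebra is $\mathcal{F}_N=(H,V,\oplus_{HH},\oplus_{HV},\oplus_{VH},\odot_{VV},\odot_{VH},\mathrm{id}_Q,\mathrm{id}_{Q^2})$ with $H=2^{Q^2}$, $V=2^{(Q^2)^2}$, $\mathrm{id}_Q=\{(q,q)\mid q\in Q\}$, $\mathrm{id}_{Q^2}=\{((q_1,q_2),(q_1,q_2))\mid q_1,q_2\in Q\}$, and $F_1\oplus_{HH}F_2=\{(q_1,q_3)\mid (q_1,q_2)\in F_1,(q_2,q_3)\in F_2\}$; $C_1\odot_{VV}C_2=\{((q_1,q_2),(q_5,q_6))\mid ((q_1,q_2),(q_3,q_4))\in C_1,((q_3,q_4),(q_5,q_6))\in C_2\}$; $C\odot_{VH}F=\{(q_1,q_2)\mid((q_1,q_2),(q_3,q_4))\in C,(q_3,q_4)\in F\}$; $F\oplus_{HV}C=\{((q_1,q_3),(q_4,q_5))\mid (q_1,q_2)\in F,((q_2,q_3),(q_4,q_5))\in C\}$; $C\oplus_{VH}F=\{((q_1,q_5),(q_3,q_4))\mid((q_1,q_2),(q_3,q_4))\in C,(q_2,q_5)\in F\}$. A forest algebra is $(H,V,\oplus_{HH},\oplus_{HV},\oplus_{VH},\odot_{VV},\odot_{VH},\varepsilon,\Box)$ with monoids $(H,\oplus_{HH},\varepsilon)$,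 $(V,\odot_{VV},\Box)$, maps $\oplus_{HV}:H\times V\to V$, $\oplus_{VH}:V\times H\to V$, $\odot_{VH}:V\times H\to H$, satisfying for all $F_i\in H,C_i\in V$ (indices determined by sorts): $\varepsilon\oplus F_1=F_1=F_1\oplus\varepsilon$; $\varepsilon\oplus C_1=C_1=C_1\oplus\varepsilon$; $\Box\odot C_1=C_1=C_1\odot\Box$; $\Box\odot F_1=F_1$; $(F_1\oplus F_2)\oplus F_3=F_1\oplus(F_2\oplus F_3)$; $(F_1\oplus F_2)\oplus C_1=F_1\oplus(F_2\oplus C_1)$; $(C_1\oplus F_1)\oplus F_2=C_1\oplus(F_1\oplus F_2)$; $(F_1\oplus C_1)\oplus F_2=F_1\oplus(C_1\oplus F_2)$; $(C_1\odot C_2)\odot C_3=C_1\odot(C_2\odot C_3)$; $(C_1\odot C_2)\odot F_1=C_1\odot(C_2\odot F_1)$; $(F_1\oplus C_1)\odot F_2=F_1\oplus(C_1\odot F_2)$; $(F_1\oplus C_1)\odot C_2=F_1\oplus(C_1\odot C_2)$; $(C_1\oplus F_1)\odot F_2=(C_1\odot F_2)\oplus F_1$; $(C_1\oplus F_1)\odot C_2=(C_1\odot C_2)\oplus F_1$. *)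

(* Defs.v *)
From mathcomp Require Import all_boot.
Set Implicit Arguments. Unset Strict Implicit. Unset Printing Implicit Defensive.

Record stepwise_nfta (Q Sigma : finType) := StepwiseNFTA {
  nfta_delta : {set Q * Q * Q};
  nfta_Init  : {set Sigma * Q};
  nfta_q0    : Q;
  nfta_qF    : Q }.

Definition is_forest_algebra (H V : Type)
  (addHH : H -> H -> H) (addHV : H -> V -> V) (addVH : V -> H -> V)
  (compVV : V -> V -> V) (compVH : V -> H -> H) (eps : H) (box : V) : Prop :=
  (forall F1, addHH eps F1 = F1 /\ addHH F1 eps = F1) /\
      (forall C1, addHV eps C1 = C1 /\ addVH C1 eps = C1) /\
      (forall C1, compVV box C1 = C1 /\ compVV C1 box = C1) /\
      (forall F1, compVH box F1 = F1) /\
      (forall F1 F2 F3, addHH (addHH F1 F2) F3 = addHH F1 (addHH F2 F3)) /\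
      (forall F1 F2 C1, addHV (addHH F1 F2) C1 = addHV F1 (addHV F2 C1)) /\
      (forall C1 F1 F2, addVH (addVH C1 F1) F2 = addVH C1 (addHH F1 F2)) /\
      (forall F1 C1 F2, addVH (addHV F1 C1) F2 = addHV F1 (addVH C1 F2)) /\
      (forall C1 C2 C3, compVV (compVV C1 C2) C3 = compVV C1 (compVV C2 C3)) /\
      (forall C1 C2 F1, compVH (compVV C1 C2) F1 = compVH C1 (compVH C2 F1)) /\
      (forall F1 C1 F2, compVH (addHV F1 C1) F2 = addHH F1 (compVH C1 F2)) /\
      (forall F1 C1 C2, compVV (addHV F1 C1) C2 = addHV F1 (compVV C1 C2)) /\
      (forall C1 F1 F2, compVH (addVH C1 F1) F2 = addHH (compVH C1 F2) F1) /\
      (forall C1 F1 C2, compVV (addVH C1 F1) C2 = addVH (compVV C1 C2) F1).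

Section TransitionAlgebra.
Variable Q : finType.

Definition tH := {set Q * Q}.
Definition tV := {set (Q * Q) * (Q * Q)}.

Definition ta_addHH (F1 F2 : tH) : tH :=
  [set p : Q * Q | [exists q2 : Q, ((p.1, q2) \in F1) && ((q2, p.2) \in F2)]].

Definition ta_compVV (C1 C2 : tV) : tV :=
  [set c : (Q * Q) * (Q * Q) |
    [exists r : Q * Q, ((c.1, r) \in C1) && ((r, c.2) \in C2)]].

Definition ta_compVH (C : tV) (F : tH) : tH :=
  [set p : Q * Q | [exists r : Q * Q, ((p, r) \in C) && (r \in F)]].

(* F ⊕_HV C = {((q1,q3),(q4,q5)) | (q1,q2) ∈ F, ((q2,q3),(q4,q5)) ∈ C} *)
Definition ta_addHV (F : tH) (C : tV) : tV :=
  [set c : (Q * Q) * (Q * Q) |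
    [exists q2 : Q, ((c.1.1, q2) \in F) && (((q2, c.1.2), c.2) \in C)]].

(* C ⊕_VH F = {((q1,q5),(q3,q4)) | ((q1,q2),(q3,q4)) ∈ C, (q2,q5) ∈ F} *)
Definition ta_addVH (C : tV) (F : tH) : tV :=
  [set c : (Q * Q) * (Q * Q) |
    [exists q2 : Q, (((c.1.1, q2), c.2) \in C) && ((q2, c.1.2) \in F)]].

Definition ta_idQ : tH := [set p : Q * Q | p.1 == p.2].
Definition ta_idQ2 : tV := [set c : (Q * Q) * (Q * Q) | c.1 == c.2].

End TransitionAlgebra.

(* The transition algebra of a stepwise NFTA (it depends only on Q). *)
Definition transition_algebra_is_forest_algebra
  (Q Sigma : finType) (N : stepwise_nfta Q Sigma) : Prop :=
  @is_forest_algebra (tH Q) (tV Q) (@ta_addHH Q) (@ta_addHV Q) (@ta_addVH Q)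
    (@ta_compVV Q) (@ta_compVH Q) (ta_idQ Q) (ta_idQ2 Q).

(* Main.v *)
Require Import Defs.
From mathcomp Require Import all_boot.

Ltac dec := repeat (match goal with
  | H : is_true [exists _, _] |- _ => case/existsP: H => ? H
  | H : is_true (_ && _) |- _ => let a := fresh "H" in let b := fresh "H" in case/andP: H => a b
  | H : is_true (_ == _) |- _ => move/eqP: H => H
  | H : (_, _) = (_, _) |- _ => case: H => ? ?
  | x : prod _ _ |- _ => destruct x
  | H : ?a = ?b |- _ => first [subst a | subst b]
  | H : is_true (_ \in _) |- _ => progress (rewrite inE /= in H)
  end; simpl in * ).

Ltac bld := rewrite ?inE /=;
  multimatch goal with
  | |- is_true [exists _, _] => apply/existsP; eexists; bld
  | |- is_true (_ && _) => apply/andP; split; [bld | bld]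
  | |- is_true (_ == _) => apply/eqP; reflexivity
  | H : _ |- _ => exact H
  end.

Theorem lemma4p3 (Q Sigma : finType) (N : stepwise_nfta Q Sigma) :
  transition_algebra_is_forest_algebra N.
Proof.
rewrite /transition_algebra_is_forest_algebra /is_forest_algebra.
repeat split; intros; rewrite /ta_addHH /ta_addHV /ta_addVH /ta_compVV /ta_compVH /ta_idQ /ta_idQ2.
all: apply/setP => z; repeat destruct z as [z ?]; rewrite !inE /=; apply/idP/idP => H; dec; bld.
Qed.
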